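(* Let $L$ be a finite distributive lattice such that $\widetilde L$ is a regular mosaic, and let $F:\bigcup_{x\in c(L)}\mathcal D_x(\mathcal J(L))\to\mathbb R$. Define $\widetilde F:\widetilde L\to\mathbb R$ by $\widetilde F(y,z):=F(1_{\eta(y)}-1_{\eta(z)})$, and let $\widetilde m:\widetilde L\to\mathbb R$ be its Möbius transform, i.e. the unique function with $\widetilde F(x,y)=\sum_{(z,t)\in\widetilde L,\,(z,t)\le(x,y)}\widetilde m(z,t)$ for all $(x,y)\in\widetilde L$. Then for every $f\in\widetilde{|L|}$, $$\overline F(f)=\sum_{(s,t)\in\widetilde L}\widetilde m(s,t)\Big[\min_{j\in\eta(s)}f^+(j)\ \wedge\ \min_{j\in\eta(t)}f^-(j)\Big],$$ where $f^+:=\max(f,0)$, $f^-:=\max(-f,0)$, $\wedge$ denotes minimum, and a minimum over the empty set is $1$.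
   Context: $L$ has least element $\bot$ and greatest element $\top$; $\mathcal J(L)$ is its set of join-irreducible elements (elements covering exactly one element) with the induced order; $\eta(y):=\{j\in\mathcal J(L): j\le y\}$. $c(L)$ is the set of complemented elements ($x$ with some $x'$, unique, such that $x\wedge x'=\bot$, $x\vee x'=\top$). $\widetilde L:=\{(x,y)\in L^2: x\wedge y=\bot\}$ with the product order. $\widetilde L$ is a regular mosaic if every connected component of the Hasse diagram of $\mathcal J(L)$ has a least element. A map $g$ on $\mathcal J(L)$ is nonincreasing if $j\le j'$ implies $g(j)\ge g(j')$. For $x\in c(L)$: $\mathcal D_x(\mathcal J(L))$ is the set of maps $\xi:\mathcal J(L)\to\{-1,0,1\}$ with $|\xi|$ nonincreasing, $\xi\ge0$ on $\eta(x)$, $\xi\le0$ on $\eta(x')$; $\mathcal C_x(\mathcal J(L))$ is the set of maps $f:\mathcal J(L)\to[-1,1]$ with $|f|$ nonincreasing, $f\ge0$ on $\eta(x)$, $f\le0$ on $\eta(x')$; and $\widetilde{|L|}:=\bigcup_{x\in c(L)}\mathcal C_x(\mathcal J(L))$. For $f\in\widetilde{|L|}$, $|f|$ can be written uniquely as $|f|=\sum_{i=0}^p\alpha_i1_{X_i}$ with $X_0\subsetneq\cdots\subsetneq X_p$ downsets of $\mathcal J(L)$, $\alpha_i>0$, $\sum_i\alpha_i=1$; the (bipolar) natural extension is $\overline F(f):=\sum_{i=0}^p\alpha_iF(1_{X_i\cap\eta(x)}-1_{X_i\cap\eta(x')})$, where $x\in c(L)$ is any element with $f\in\mathcal C_x(\mathcal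 J(L))$ (the value does not depend on this choice). *)

(* Defs.v *)
From HB Require Import structures.
From mathcomp Require Import all_boot all_order all_algebra.
Set Implicit Arguments. Unset Strict Implicit. Unset Printing Implicit Defensive.
Import Order.TTheory GRing.Theory Num.Theory.

Section Defs.
Context {d : Order.disp_t} (L : finTBDistrLatticeType d).
Local Open Scope order_scope.

Definition covers (x y : L) : bool :=
  (y < x) && [forall z : L, ~~ ((y < z) && (z < x))].

Definition is_ji (j : L) : bool := #|[set y : L | covers j y]| == 1%N.

(* J(L) with the induced order (compare via val) *)
Definition JI : finType := {j : L | is_ji j}.

Definition etaJ (y : L) : {set JI} := [set j : JI | val j <= y].
Arguments etaJ : clear implicits.

Definition jcover (a b : JI) : bool :=
  (val a < val b) && [forall c : JI, ~~ ((val a < val c) && (val c < val b))].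

Definition hasse : rel JI := fun a b => jcover a b || jcover b a.

(* Ltilde is a regular mosaic: every connected component of the Hasse
   diagram of J(L) has a least element *)
Definition regular_mosaic : Prop :=
  forall a : JI, exists m : JI,
    connect hasse m a /\ forall b : JI, connect hasse a b -> val m <= val b.

Definition is_compl (x x' : L) : Prop := x `&` x' = \bot /\ x `|` x' = \top.
End Defs.
Arguments etaJ {d L} y.
Arguments is_compl {d L} x x'.

Section Real.
Context {d : Order.disp_t} (L : finTBDistrLatticeType d) (R : realFieldType).
Local Open Scope ring_scope.

Definition sind (A B : {set JI L}) : {ffun JI L -> R} :=
  [ffun j => (j \in A)%:R - (j \in B)%:R].

Definition in_Cx (x x' : L) (f : {ffun JI L -> R}) : Prop :=
  (forall j, -1 <= f j <= 1) /\
  (forall j j' : JI L, (val j <= val j')%O -> `|f j'| <= `|f j|) /\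
  (forall j, j \in etaJ x -> 0 <= f j) /\
  (forall j, j \in etaJ x' -> f j <= 0).

Definition level_decomp (f : {ffun JI L -> R}) (p : nat)
    (X : 'I_p.+1 -> {set JI L}) (al : 'I_p.+1 -> R) : Prop :=
  (forall i (a b : JI L), (val a <= val b)%O -> b \in X i -> a \in X i) /\
  (forall i k : 'I_p.+1, (i < k)%N -> X i \proper X k) /\
  (forall i, 0 < al i) /\
  (\sum_(i < p.+1) al i = 1) /\
  (forall j, `|f j| = \sum_(i < p.+1) al i * (j \in X i)%:R).

(* natural (bipolar) extension value computed from a decomposition and x *)
Definition nat_ext_val (F : {ffun JI L -> R} -> R) (x x' : L) (p : nat)
    (X : 'I_p.+1 -> {set JI L}) (al : 'I_p.+1 -> R) : R :=
  \sum_(i < p.+1) al i * F (sind (X i :&: etaJ x) (X i :&: etaJ x')).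

Definition Ftilde (F : {ffun JI L -> R} -> R) (y z : L) : R :=
  F (sind (etaJ y) (etaJ z)).

Definition is_moebius (F : {ffun JI L -> R} -> R) (m : L -> L -> R) : Prop :=
  forall x y : L, (x `&` y == \bot)%O ->
    Ftilde F x y =
      \sum_(z : L) \sum_(t : L | [&& (z `&` t == \bot)%O, (z <= x)%O & (t <= y)%O])
         m z t.

Definition minJ (A : {set JI L}) (g : JI L -> R) : R :=
  \big[Num.min/1]_(j in A) g j.

Definition fplus (f : {ffun JI L -> R}) (j : JI L) : R := Num.max (f j) 0.
Definition fminus (f : {ffun JI L -> R}) (j : JI L) : R := Num.max (- f j) 0.
End Real.

(* Main.v *)
Require Import Defs.
From HB Require Import structures.
From mathcomp Require Import all_boot all_order all_algebra.
Set Implicit Arguments. Unset Strict Implicit. Unset Printing Implicit Defensive.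
Import Order.TTheory GRing.Theory Num.Theory.

Section Lat.
Context {d : Order.disp_t} (L : finTBDistrLatticeType d).
Local Open Scope order_scope.

Definition dn (w : L) : {set L} := [set z : L | z <= w].

Lemma dn_proper (u w : L) : u < w -> (#|dn u| < #|dn w|)%N.
Proof.
move=> uw; apply: proper_card; apply/properP; split.
  apply/subsetP => z; rewrite !inE => zu; exact: le_trans zu (ltW uw).
exists w; rewrite !inE ?lexx //; apply/negP => wu.
by move: (lt_le_trans uw wu); rewrite ltxx.
Qed.

Lemma lower_cover (u j : L) : u < j -> exists w, u <= w /\ covers j w.
Proof.
move=> uj.
have P0 : (u <= u) && (u < j) by rewrite lexx uj.
case: (@arg_maxnP L u (fun w => (u <= w) && (w < j)) (fun w => #|dn w|) P0) => w /andP[uw wj] Hmax.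
exists w; split => //; rewrite /covers wj /=.
apply/forallP => z; apply/negP => /andP[wz zj].
have := Hmax z; rewrite (le_trans uw (ltW wz)) zj => /(_ isT).
move=> /= h; move: (dn_proper wz); by rewrite ltnNge h.
Qed.

Lemma ji_neq0 (j : L) : is_ji j -> \bot < j.
Proof.
move=> hj; rewrite lt_neqAle le0x andbT; apply/eqP => ej.
move: hj; rewrite /is_ji.
have -> : [set y : L | covers j y] = set0.
  apply/setP => y; rewrite !inE /covers -ej ltx0 //.
by rewrite cards0.
Qed.

Lemma ji_lt_join (j u v : L) : is_ji j -> u < j -> v < j -> u `|` v < j.
Proof.
move=> hj uj vj.
case: (lower_cover uj) => w1 [uw1 c1]; case: (lower_cover vj) => w2 [vw2 c2].
move: hj; rewrite /is_ji => /eqP /mem_card1 [c Hc].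
have e1 : w1 = c by move: (Hc w1); rewrite inE c1 => /esym /eqP.
have e2 : w2 = c by move: (Hc w2); rewrite inE c2 => /esym /eqP.
have cj : c < j by move: c1; rewrite e1 /covers => /andP[].
apply: le_lt_trans cj; rewrite leUx -e1 uw1 /=; by rewrite e1 -e2.
Qed.

Lemma ji_prime (j a b : L) : is_ji j -> j <= a `|` b -> j <= a \/ j <= b.
Proof.
move=> hj hab.
have ej : j = (j `&` a) `|` (j `&` b) by rewrite -meetUr; apply/esym/meet_idPl.
case: (boolP (j <= a)) => ja; first by left.
case: (boolP (j <= b)) => jb; first by right.
have l1 : j `&` a < j by rewrite lt_neqAle leIl andbT; apply: contra ja => /eqP <-; exact: leIr.
have l2 : j `&` b < j by rewrite lt_neqAle leIl andbT; apply: contra jb => /eqP <-; exact: leIr.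
have := ji_lt_join hj l1 l2; by rewrite -ej ltxx.
Qed.

Lemma ji_prime_big (I : eqType) (r : seq I) (P : pred I) (F : I -> L) (j : L) :
  is_ji j -> j <= \join_(k <- r | P k) F k ->
  exists k, [/\ k \in r, P k & j <= F k].
Proof.
move=> hj; elim: r => [|k r IH].
  rewrite big_nil lex0 => /eqP ej; move: (ji_neq0 hj); by rewrite ej ltxx.
rewrite big_cons; case: ifP => Pk.
  case/(ji_prime hj) => h; first by exists k; rewrite inE eqxx.
  by case: (IH h) => k' [k'r Pk' jk']; exists k'; rewrite inE k'r orbT.
by move=> h; case: (IH h) => k' [k'r Pk' jk']; exists k'; rewrite inE k'r orbT.
Qed.

Lemma eta_le (s y : L) :
  (forall j : JI L, val j <= s -> val j <= y) -> s <= y.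
Proof.
move=> H; apply/negPn/negP => nsy.
have P0 : (s <= s) && ~~ (s <= y) by rewrite lexx nsy.
case: (@arg_minnP L s (fun w => (w <= s) && ~~ (w <= y)) (fun w => #|dn w|) P0) => w /andP[ws nwy] Hmin.
have below : forall c, c < w -> c <= y.
  move=> c cw; apply/negPn/negP => ncy.
  have := Hmin c; rewrite (le_trans (ltW cw) ws) ncy => /(_ isT).
  move=> /= h; move: (dn_proper cw); by rewrite ltnNge h.
have w0 : \bot < w.
  rewrite lt_neqAle le0x andbT; apply: contra nwy => /eqP <-; exact: le0x.
case: (lower_cover w0) => c [_ cc].
have hw : is_ji w.
  rewrite /is_ji; apply/eqP; apply: (@eq_card1 _ c) => c'.
  rewrite !inE; apply/idP/idP; last by move/eqP ->.
  move=> cc'; apply/negPn/negP => nc.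
  move: cc cc' => /andP[cw /forallP Hc] /andP[c'w /forallP Hc'].
  have cy := below _ cw; have c'y := below _ c'w.
  have jle : c `|` c' <= w by rewrite leUx (ltW cw) (ltW c'w).
  move: jle; rewrite le_eqVlt => /orP[/eqP ej|jlt].
    by move: nwy; rewrite -ej leUx cy c'y.
  have : c `|` c' = c.
    apply/eqP; move: (Hc (c `|` c')); rewrite jlt andbT.
    rewrite lt_neqAle leUl andbT negbK eq_sym; by [].
  move=> ec; have c'c : c' <= c by rewrite -ec leUr.
  have c'lt : c' < c by rewrite lt_neqAle c'c andbT.
  by move: (Hc' c); rewrite c'lt cw.
have := H (exist _ w hw) ws; by rewrite (negbTE nwy).
Qed.


Lemma etaJ_join (A : {set JI L}) :
  (forall a b : JI L, val a <= val b -> b \in A -> a \in A) ->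
  etaJ (\join_(k in A) val k) = A.
Proof.
move=> down; apply/setP => j; rewrite inE; apply/idP/idP.
  case/(ji_prime_big (valP j)) => k [_ kA jk]; exact: down jk kA.
by move=> jA; rewrite (bigD1 j) //= leUl.
Qed.

Lemma le_etaE (s w : L) : (s <= w) = (etaJ s \subset etaJ w).
Proof.
apply/idP/idP.
  by move=> sw; apply/subsetP => j; rewrite !inE => js; exact: le_trans sw.
move/subsetP => H; apply: eta_le => j js.
by have := H j; rewrite !inE => /(_ js).
Qed.

Lemma ji_compl (x x' : L) (j : JI L) :
  is_compl x x' -> (j \in etaJ x) || (j \in etaJ x').
Proof.
case=> _ hU; rewrite !inE.
have : val j <= x `|` x' by rewrite hU lex1.
by case/(ji_prime (valP j)) => ->; rewrite ?orbT.
Qed.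

End Lat.

Section RealPart.
Context {d : Order.disp_t} (L : finTBDistrLatticeType d) (R : realFieldType).
Local Open Scope ring_scope.

Lemma mJ_le (A : {set JI L}) (g : JI L -> R) j : j \in A -> minJ A g <= g j.
Proof. by move=> jA; rewrite /minJ (bigD1 j) //= ge_min lexx. Qed.

Lemma le_mJ (a : R) (A : {set JI L}) (g : JI L -> R) :
  a <= 1 -> (forall j, j \in A -> a <= g j) -> a <= minJ A g.
Proof.
move=> a1 H; rewrite /minJ; apply: (big_ind (fun v => a <= v)) => //.
by move=> u v au av; rewrite le_min au av.
Qed.

Lemma mJ_le1 (A : {set JI L}) (g : JI L -> R) :
  (forall j, j \in A -> g j <= 1) -> minJ A g <= 1.
Proof.
move=> H; rewrite /minJ; apply: (big_ind (fun v => v <= 1)) => //.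
by move=> u v au av; rewrite ge_min au.
Qed.

Lemma key (f : {ffun JI L -> R}) (E E' : {set JI L}) (p : nat)
    (X : 'I_p.+1 -> {set JI L}) (al : 'I_p.+1 -> R) (A B : {set JI L}) :
  (forall j, (j \in E) || (j \in E')) ->
  (forall j, -1 <= f j <= 1) ->
  (forall j, j \in E -> 0 <= f j) ->
  (forall j, j \in E' -> f j <= 0) ->
  (forall i k : 'I_p.+1, (i < k)%N -> X i \proper X k) ->
  (forall i, 0 < al i) ->
  (\sum_(i < p.+1) al i = 1) ->
  (forall j, `|f j| = \sum_(i < p.+1) al i * (j \in X i)%:R) ->
  Num.min (minJ A (fplus f)) (minJ B (fminus f)) =
  \sum_(i < p.+1) al i * ((A \subset X i :&: E) && (B \subset X i :&: E'))%:R.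
Proof.
move=> HEE hf1 hfE hfE' Hchain Hal Hsum Habs.
have fp0 j : 0 <= fplus f j by rewrite /fplus le_max lexx orbT.
have fm0 j : 0 <= fminus f j by rewrite /fminus le_max lexx orbT.
have fp1 j : fplus f j <= 1 by rewrite /fplus ge_max ler01 andbT; case/andP: (hf1 j).
have fm1 j : fminus f j <= 1.
  by rewrite /fminus ge_max ler01 andbT lerNl; case/andP: (hf1 j).
case: (boolP (A \subset E)) => [AE|/subsetPn [j jA jE]]; last first.
  have jE' : j \in E' by move: (HEE j); rewrite (negbTE jE).
  have fpj : fplus f j = 0 by rewrite /fplus max_r // hfE'.
  rewrite big1; last first.
    move=> i _; case: (boolP (A \subset X i :&: E)) => /= h; last by rewrite mulr0.
    by move: (subsetP h j jA); rewrite inE (negbTE jE) andbF.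
  have m0 : minJ A (fplus f) = 0.
    apply: le_anti; rewrite -{1}fpj mJ_le //=; apply: le_mJ => //; exact: ler01.
  rewrite m0 min_l //; apply: le_mJ => //; exact: ler01.
case: (boolP (B \subset E')) => [BE|/subsetPn [j jB jE]]; last first.
  have jE' : j \in E by move: (HEE j); rewrite (negbTE jE) orbF.
  have fmj : fminus f j = 0 by rewrite /fminus max_r // oppr_le0 hfE.
  rewrite big1; last first.
    move=> i _; case: (boolP (B \subset X i :&: E')) => /=; last by rewrite andbF mulr0.
    by move=> h; move: (subsetP h j jB); rewrite inE (negbTE jE) andbF.
  have m0 : minJ B (fminus f) = 0.
    apply: le_anti; rewrite -{1}fmj mJ_le //=; apply: le_mJ => //; exact: ler01.
  rewrite m0 min_r //; apply: le_mJ => //; exact: ler01.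
set C := A :|: B.
have condE i : ((A \subset X i :&: E) && (B \subset X i :&: E')) = (C \subset X i).
  rewrite !subsetI AE BE !andbT subUset //.
under eq_bigr do rewrite condE.
have fpA j : j \in A -> fplus f j = `|f j|.
  move=> jA; have h := hfE j (subsetP AE j jA).
  by rewrite /fplus max_l // ger0_norm.
have fmB j : j \in B -> fminus f j = `|f j|.
  move=> jB; have h := hfE' j (subsetP BE j jB).
  by rewrite /fminus max_l ?ler0_norm // oppr_ge0.
set S := \sum_(i < p.+1) _.
have S1 : S <= 1.
  rewrite -Hsum /S; apply: ler_sum => i _.
  rewrite -[X in _ <= X](mulr1 (al i)); apply: ler_wpM2l; first exact: ltW.
  by case: (C \subset X i).
have Sj j : j \in C -> S <= `|f j|.
  move=> jC; rewrite Habs /S; apply: ler_sum => i _.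
  apply: ler_wpM2l; first exact: ltW.
  rewrite ler_nat; case: (boolP (C \subset X i)) => //= h.
  by rewrite (subsetP h j jC).
apply: le_anti; apply/andP; split; last first.
  rewrite le_min; apply/andP; split; apply: le_mJ => // j jj.
    by rewrite fpA // Sj // inE jj.
  by rewrite fmB // Sj // inE jj orbT.
case: (pickP (fun i => ~~ (C \subset X i))) => [i0 Pi0|Hall]; last first.
  have -> : S = 1.
    rewrite /S -[X in _ = X]Hsum; apply: eq_bigr => i _; move: (Hall i) => /= /negbFE ->.
    by rewrite mulr1n mulr1.
  rewrite ge_min; apply/orP; left; apply: mJ_le1 => j _; exact: fp1.
case: (@arg_maxnP _ i0 (fun i => ~~ (C \subset X i)) (fun i => val i) Pi0).
move=> im Pim Hmax.
case/subsetPn: Pim => j jC jX.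
have eqc i : (C \subset X i) = (j \in X i).
  case: (leqP (val i) (val im)) => hi.
    have sub : X i \subset X im.
      move: hi; rewrite leq_eqVlt => /orP[/eqP e|lt].
        by rewrite (val_inj e).
      exact: proper_sub (Hchain _ _ lt).
    have ji : j \notin X i by apply: contra jX => h; exact: (subsetP sub).
    rewrite (negbTE ji); apply/negbTE; apply: contra ji => h; exact: (subsetP h).
  have Ci : C \subset X i.
    apply/negPn/negP => h; have := Hmax i h => /= h2; by move: hi; rewrite ltnNge h2.
  by rewrite Ci (subsetP Ci j jC).
have -> : S = `|f j|.
  by rewrite Habs /S; apply: eq_bigr => i _; rewrite eqc.
move: jC; rewrite inE => /orP[jj|jj].
  by rewrite ge_min -fpA // mJ_le.
by rewrite ge_min -fmB // mJ_le ?orbT.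
Qed.

End RealPart.

Local Open Scope ring_scope.

Theorem mainTheorem9 (d : Order.disp_t) (L : finTBDistrLatticeType d)
    (R : realFieldType) (F : {ffun JI L -> R} -> R) (m : L -> L -> R) :
  regular_mosaic L ->
  is_moebius F m ->
  forall (f : {ffun JI L -> R}) (x x' : L),
    is_compl x x' -> in_Cx x x' f ->
  forall (p : nat) (X : 'I_p.+1 -> {set JI L}) (al : 'I_p.+1 -> R),
    level_decomp f X al ->
    nat_ext_val F x x' X al =
      \sum_(s : L) \sum_(t : L | (s `&` t == \bot)%O)
         m s t * Num.min (minJ (etaJ s) (fplus f)) (minJ (etaJ t) (fminus f)).
Proof.
move=> _ Hm f x x' Hc [hf1 [_ [hfx hfx']]] p X al [Hdown [Hchain [Hal [Hsum Habs]]]].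
pose y i := (\join_(k in X i :&: etaJ x) val k)%O.
pose z i := (\join_(k in X i :&: etaJ x') val k)%O.
have downI (w : L) i : forall a b : JI L, (val a <= val b)%O ->
    b \in X i :&: etaJ w -> a \in X i :&: etaJ w.
  move=> a b ab; rewrite !inE => /andP[bX bw].
  by rewrite (Hdown i a b ab bX) (le_trans ab bw).
have ey i : etaJ (y i) = X i :&: etaJ x by apply: etaJ_join; exact: downI.
have ez i : etaJ (z i) = X i :&: etaJ x' by apply: etaJ_join; exact: downI.
have yx i : (y i <= x)%O by rewrite le_etaE ey subsetIr.
have zx i : (z i <= x')%O by rewrite le_etaE ez subsetIr.
have yz i : (y i `&` z i == \bot)%O.
  case: Hc => hI _; rewrite -lex0 -hI; exact: leI2.
have step i : F (sind R (X i :&: etaJ x) (X i :&: etaJ x')) =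
    \sum_(s : L) \sum_(t : L | (s `&` t == \bot)%O)
       m s t * ((s <= y i)%O && (t <= z i)%O)%:R.
  rewrite -ey -ez -/(Ftilde F (y i) (z i)) (Hm _ _ (yz i)).
  apply: eq_bigr => s _; rewrite big_mkcondr /=; apply: eq_bigr => t _.
  by case: ifP => _; rewrite ?mulr1 ?mulr0.
have keyst s t : Num.min (minJ (etaJ s) (fplus f)) (minJ (etaJ t) (fminus f)) =
    \sum_(i < p.+1) al i * ((s <= y i)%O && (t <= z i)%O)%:R.
  rewrite (key (E := etaJ x) (E' := etaJ x') _ _ (fun j => ji_compl j Hc) hf1 hfx hfx'
             Hchain Hal Hsum Habs).
  by apply: eq_bigr => i _; rewrite !le_etaE ey ez.
rewrite /nat_ext_val.
under eq_bigr do rewrite step mulr_sumr.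
rewrite exchange_big /=; apply: eq_bigr => s _.
under eq_bigr do rewrite mulr_sumr.
rewrite exchange_big /=; apply: eq_bigr => t _.
by rewrite keyst mulr_sumr; apply: eq_bigr => i _; rewrite mulrCA.
Qed.
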